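(* Let $\mathcal{T}$ be an MPQ-tree of an interval graph $G=(V,E)$, let $(x,y)\in E$ with $x$ over $y$ and $node(x)\neq node(y)$, and suppose the $\langle x,y\rangle$-tree-path starts in a central section $S_a$ of the Q-node $node(x)$. If there is a vertex $q\in S_a\setminus(S_{l(x)}\cup S_{r(x)})$, then $(x,y)$ is not an interval edge.
   Context: Graphs are finite and simple; for $G=(V,E)$ and $e\in E$, $G-e=(V,E\setminus\{e\})$. An edge $(x,y)\in E$ of an interval graph $G$ is an interval edge if $G-(x,y)$ is an interval graph. An MPQ-tree of an interval graph $G=(V,E)$, $V=\{1,\dots,n\}$, is a rooted plane tree whose nodes are P-nodes and Q-nodes. Each P-node carries a (possibly empty) set of vertices. A Q-node has $k\ge 3$ ordered positions $1,\dots,k$; position $i$ carries a set $S_i\subseteq V$ (the $i$-th section) and a child subtree $T_i$, which may be empty. Every vertex $v$ is assigned to exactly one node $node(v)$: either $v$ lies in the set of the P-node $node(v)$, or $node(v)$ is a Q-node and $v$ lies exactly in the sections $S_{l(v)},\dots,S_{r(v)}$ of it, with $l(v)<r(v)$. For a node with child subtrees $T_1,\dots,T_k$, $V_i$ denotes the set of vertices assigned to nodes of $T_i$ ($V_i=\emptyset$ if $T_i$ is empty). The maximal cliques of $G$ are in bijection with the descending paths from the root which at a P-node continue into one of its children (stopping if there is none) and at a Q-node choose a position $i$ and continue into $T_i$ (stopping if $T_i$ is empty); the clique is the union of the sets of the visited P-nodes and the chosen sections. Reading these cliques left to right gives a linear order of the maximal cliques, and the orders obtained this way after arbitrarily permuting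 children of P-nodes and reversing the positions of Q-nodes are exactly the orders of the maximal cliques of $G$ in which the cliques containing any fixed vertex are consecutive. Moreover, for every Q-node with sections $S_1,\dots,S_k$: (a) $V_1\neq\emptyset$ and $V_k\ne\emptyset$; (b) $S_1\subseteq S_2$ and $S_k\subseteq S_{k-1}$; (c) $S_{i-1}\cap S_i\neq\emptyset$ for $2\le i\le k$; (d) $S_{i-1}\neq S_i$ for $2\le i\le k$; (e) $(S_i\cap S_{i+1})\setminus S_1\neq\emptyset$ and $(S_{i-1}\cap S_i)\setminus S_k\neq\emptyset$ for $2\le i\le k-1$; (f) $(S_{i-1}\cup V_{i-1})\setminus S_i\neq\emptyset$ and $(S_i\cup V_i)\setminus S_{i-1}\neq\emptyset$ for $2\le i\le k$; and further (g) no empty P-node has an empty P-node as its parent, (h) no P-node has exactly one child whose root is a P-node, (i) every child subtree of a P-node is nonempty. We say $x$ is over $y$ if $node(x)$ is the lowest common ancestor of $node(x)$ and $node(y)$ in $\mathcal{T}$. For $x$ over $y$ with $node(x)\ne node(y)$, the $\langle x,y\rangle$-tree-path is the tree path $node(x)=n_1,n_2,\dots,n_t=node(y)$. It starts in a central section $S_a$ if $n_1$ is a Q-node and $n_2$ lies in the subtree $T_a$ of $n_1$ with $l(x)<a<r(x)$. *)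

(* Defs.v *)
From Stdlib Require Import Permutation.
From Stdlib Require List.
From mathcomp Require Import all_boot.

Set Implicit Arguments.
Unset Strict Implicit.
Unset Printing Implicit Defensive.

Definition clique (T : finType) (e : rel T) (K : {set T}) : Prop :=
  forall u v, u \in K -> v \in K -> u != v -> e u v.

Definition max_clique (T : finType) (e : rel T) (K : {set T}) : Prop :=
  clique e K /\ forall K', clique e K' -> K \subset K' -> K' = K.

(* Interval graph: vertices are (closed, integer-endpoint) intervals,
   adjacency = distinct vertices with intersecting intervals.  For finite
   graphs this is equivalent to real intervals. *)
Definition interval_graph (T : finType) (e : rel T) : Prop :=
  exists lo hi : T -> nat,
    (forall v, lo v <= hi v) /\
    forall u v, e u v <-> (u != v /\ maxn (lo u) (lo v) <= minn (hi u) (hi v)).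

Definition remove_edge (T : finType) (e : rel T) (x y : T) : rel T :=
  fun u v => e u v && ~~ (((u == x) && (v == y)) || ((u == y) && (v == x))).

(* A P-node carries a set and a list of (nonempty) child subtrees; a Q-node
   carries its positions in order: section S_i and optional child T_i
   (None = empty subtree).  Positions are 0-based: paper position i is
   index i-1 here. *)
Inductive mpq (T : finType) : Type :=
| PN : {set T} -> seq (mpq T) -> mpq T
| QN : seq ({set T} * option (mpq T)) -> mpq T.

Arguments PN {T}.
Arguments QN {T}.

Section MPQ.
Variable T : finType.

Definition sec (secs : seq ({set T} * option (mpq T))) (i : nat) : {set T} :=
  (nth (set0, None) secs i).1.

(* The maximal cliques read left to right (the canonical order). *)
Fixpoint leaves (t : mpq T) : seq {set T} :=
  match t with
  | PN Sx cs =>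
      if cs is [::] then [:: Sx]
      else flatten (map (fun c => map (setU Sx) (leaves c)) cs)
  | QN secs =>
      flatten (map (fun p => match p.2 with
                             | None => [:: p.1]
                             | Some c => map (setU p.1) (leaves c)
                             end) secs)
  end.

Definition p_orders (Sx : {set T}) (Ps : seq (seq {set T} -> Prop))
    (s : seq {set T}) : Prop :=
  exists Ps' ss, Permutation Ps Ps' /\ List.Forall2 (fun P x => P x) Ps' ss /\
    s = flatten (map (map (setU Sx)) ss).

Definition q_orders (Qs : seq (seq {set T} -> Prop)) (s : seq {set T}) : Prop :=
  exists ss, List.Forall2 (fun P x => P x) Qs ss /\
    (s = flatten ss \/ s = flatten (rev ss)).

(* is_order t s : s is a clique order obtained from t by permuting children
   of P-nodes and reversing Q-nodes (arbitrarily, throughout the tree). *)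
Fixpoint is_order (t : mpq T) : seq {set T} -> Prop :=
  match t with
  | PN Sx cs =>
      if cs is [::] then fun s => s = [:: Sx]
      else p_orders Sx (map is_order cs)
  | QN secs =>
      q_orders (map (fun p => match p.2 with
                              | None => fun s => s = [:: p.1]
                              | Some c => fun s =>
                                  exists s', is_order c s' /\ s = map (setU p.1) s'
                              end) secs)
  end.

Fixpoint subtree (t : mpq T) (a : seq nat) : option (mpq T) :=
  match a with
  | [::] => Some t
  | i :: a' =>
      match t with
      | PN _ cs => if i < size cs then subtree (nth t cs i) a' else None
      | QN secs => if (nth (set0, None) secs i).2 is Some c
                   then subtree c a' else None
      end
  end.

(* v is assigned to (occurs at) the node with address a *)
Definition occ (t : mpq T) (a : seq nat) (v : T) : Prop :=
  match subtree t a with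
  | Some (PN Sx _) => v \in Sx
  | Some (QN secs) => has (fun p : {set T} * option (mpq T) => v \in p.1) secs
  | None => False
  end.

Definition Vsub (t : mpq T) (b : seq nat) (i : nat) (v : T) : Prop :=
  exists rest, occ t (b ++ i :: rest) v.

Definition consec (s : seq {set T}) : Prop :=
  forall v i j k, i <= j -> j <= k -> k < size s ->
    v \in nth set0 s i -> v \in nth set0 s k -> v \in nth set0 s j.

Definition Qnode_ok (t : mpq T) (b : seq nat)
    (secs : seq ({set T} * option (mpq T))) : Prop :=
  let k := size secs in
  let Sx := sec secs in
  [/\ 3 <= k,
      forall v, has (fun p : {set T} * option (mpq T) => v \in p.1) secs ->
        exists l r, [/\ l < r, r < k &
          forall i, i < k -> (v \in Sx i <-> l <= i <= r)],
      (exists v, Vsub t b 0 v) /\ (exists v, Vsub t b k.-1 v),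
      Sx 0 \subset Sx 1 /\ Sx k.-1 \subset Sx k.-2 &
      forall i, 1 <= i -> i < k ->
        [/\ Sx i.-1 :&: Sx i != set0,
            Sx i.-1 != Sx i,
            (i < k.-1 ->
               (Sx i :&: Sx i.+1) :\: Sx 0 != set0 /\
               (Sx i.-1 :&: Sx i) :\: Sx k.-1 != set0) &
            (exists v, (v \in Sx i.-1 \/ Vsub t b i.-1 v) /\ v \notin Sx i) /\
            (exists v, (v \in Sx i \/ Vsub t b i v) /\ v \notin Sx i.-1)]].

Definition Pnode_ok (t : mpq T) (b : seq nat) (Sx : {set T}) (cs : seq (mpq T))
    : Prop :=
  [/\ (Sx = set0 -> forall c Sx' cs',
          subtree t (b ++ [:: c]) = Some (PN Sx' cs') -> Sx' != set0),
      ~ (exists Sx' cs', cs = [:: PN Sx' cs']) &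
      forall c, c < size cs -> exists v, Vsub t b c v].

Definition is_MPQ_tree (e : rel T) (t : mpq T) : Prop :=
  [/\
      forall v, exists! a, occ t a v,
      forall b secs, subtree t b = Some (QN secs) -> Qnode_ok t b secs,
      forall b Sx cs, subtree t b = Some (PN Sx cs) -> Pnode_ok t b Sx cs,
      uniq (leaves t) /\ (forall K, K \in leaves t <-> max_clique e K) &
      forall s, is_order t s <->
        [/\ uniq s, (forall K, K \in s <-> max_clique e K) & consec s]].

End MPQ.

(* Main.v *)
Require Import Defs.
From Stdlib Require Import Permutation.
From Stdlib Require List.
From mathcomp Require Import all_boot.
From mathcomp Require Import zify.
From Stdlib Require Import Lia.

Set Implicit Arguments.
Unset Strict Implicit.
Unset Printing Implicit Defensive.

Section Tree.
Variable T : finType.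

Definition mpq_ind' (P : mpq T -> Prop)
  (HP : forall Sx cs, (forall c, List.In c cs -> P c) -> P (PN Sx cs))
  (HQ : forall secs, (forall S c, List.In (S, Some c) secs -> P c) -> P (QN secs)) :
  forall t, P t :=
  fix F t := match t with
  | PN Sx cs => HP Sx cs
      ((fix G cs : forall c, List.In c cs -> P c :=
         match cs with
         | [::] => fun c (H : List.In c [::]) => match H with end
         | c0 :: cs' => fun c H => match H with
                         | or_introl E => match E in _ = c' return P c' with erefl => F c0 end
                         | or_intror H' => G cs' c H'
                         end
         end) cs)
  | QN secs => HQ secs
      ((fix G secs : forall S c, List.In (S, Some c) secs -> P c :=
         match secs with
         | [::] => fun S c (H : List.In (S, Some c) [::]) => match H with end
         | p0 :: secs' => fun S c H => match H with
            | or_introl E =>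
               match p0 as p return p = (S, Some c) -> P c with
               | (S0, Some c0) => fun E' => match E' in _ = pr return P (match pr.2 with Some c1 => c1 | None => c0 end) with erefl => F c0 end
               | (S0, None) => fun E' => match E' in _ = pr return (match pr.2 with Some _ => P c | None => True end) with erefl => I end
               end E
            | or_intror H' => G secs' S c H'
            end
         end) secs)
  end.

Lemma In_nthP (A : Type) (d : A) (l : seq A) z :
  List.In z l -> exists2 i, i < size l & nth d l i = z.
Proof.
elim: l => //= c l IH [->|/IH [i Hi <-]]; first by exists 0.
by exists i.+1.
Qed.

Lemma nth_In (A : Type) (d : A) (l : seq A) i : i < size l -> List.In (nth d l i) l.
Proof. elim: l i => //= c l IH [|i] /=; [left | right; apply: IH]; done. Qed.

Lemma InE (A : eqType) (z : A) l : List.In z l <-> z \in l.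
Proof.
elim: l => //= c l IH; rewrite in_cons; split.
  by case=> [->|/IH ->]; rewrite ?eqxx ?orbT.
by case/orP=> [/eqP->|/IH]; [left|right].
Qed.

Lemma Forall2_nth (A B : Type) (R : A -> B -> Prop) l1 l2 da db :
  List.Forall2 R l1 l2 -> size l1 = size l2 /\
  forall i, i < size l1 -> R (nth da l1 i) (nth db l2 i).
Proof.
elim=> [|a b l1' l2' Hab _ [IHs IH]] //=; split; first by rewrite IHs.
by case=> [|i] //= Hi; apply: IH.
Qed.

Lemma Forall2_In_r (A B : Type) (R : A -> B -> Prop) l1 l2 z :
  List.Forall2 R l1 l2 -> List.In z l2 -> exists a, List.In a l1 /\ R a z.
Proof.
elim=> [|a b l1' l2' Hab _ IH] //= [<-|/IH [a' [Ha' R']]].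
  by exists a; split => //; left.
by exists a'; split => //; right.
Qed.

Lemma Forall2_In_l (A B : Type) (R : A -> B -> Prop) l1 l2 z :
  List.Forall2 R l1 l2 -> List.In z l1 -> exists b, List.In b l2 /\ R z b.
Proof.
elim=> [|a b l1' l2' Hab _ IH] //= [<-|/IH [a' [Ha' R']]].
  by exists b; split => //; left.
by exists a'; split => //; right.
Qed.

Lemma In_map (A B : Type) (f : A -> B) l z :
  List.In z (map f l) -> exists a, List.In a l /\ f a = z.
Proof.
elim: l => //= a l IH [<-|/IH [a' [H1 H2]]]; first by exists a; split => //; left.
by exists a'; split => //; right.
Qed.

Lemma mem_flatten_rev (A : eqType) (ss : seq (seq A)) z :
  (z \in flatten (rev ss)) = (z \in flatten ss).
Proof. by apply/flattenP/flattenP => -[s0]; rewrite ?mem_rev => H1 H2; exists s0; rewrite ?mem_rev. Qed.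

Lemma subtree_cat (t : mpq T) b1 b2 :
  subtree t (b1 ++ b2) = if subtree t b1 is Some n then subtree n b2 else None.
Proof.
elim: b1 t => //= i b1 IH [Sx cs|secs].
  by case: ifP.
by case: (nth _ secs i).2.
Qed.

Lemma occ_cat (t n : mpq T) b1 b2 v :
  subtree t b1 = Some n -> occ t (b1 ++ b2) v = occ n b2 v.
Proof. by rewrite /occ subtree_cat => ->. Qed.

Lemma occ_PN Sx cs i b v : i < size cs ->
  @occ T (PN Sx cs) (i :: b) v = occ (nth (PN Sx cs) cs i) b v.
Proof. by move=> Hi; rewrite /occ /= Hi. Qed.

Lemma occ_QN secs i c b v : (nth (set0, None) secs i).2 = Some c ->
  @occ T (QN secs) (i :: b) v = occ c b v.
Proof. by move=> Hi; rewrite /occ /= Hi. Qed.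

Lemma has_sec (secs : seq ({set T} * option (mpq T))) p v :
  List.In p secs -> v \in p.1 -> has (fun p : {set T} * option (mpq T) => v \in p.1) secs.
Proof. elim: secs => //= p0 secs IH [<- ->//|/IH H /H ->]; by rewrite orbT. Qed.

Lemma order_occ (c : mpq T) : forall s K v, is_order c s -> K \in s -> v \in K ->
  exists b, occ c b v.
Proof.
elim/mpq_ind': c => [Sx cs IH|secs IH] s K v.
  case: cs IH => [|c0 cs'] IH /=.
    by move=> -> ; rewrite inE => /eqP -> Hv; exists [::].
  set cs := c0 :: cs'.
  move=> [Ps' [ss [Hperm [HF ->]]]].
  case/flattenP=> sK /mapP [s0 Hs0 ->] /mapP [K0 HK0 ->]; rewrite inE => /orP [Hv|Hv].
    by exists [::].
  have [P [HP HPs]] := Forall2_In_r HF (proj2 (InE _ _) Hs0).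
  have HP' : List.In P (map (@is_order T) cs) := Permutation_in _ (Permutation_sym Hperm) HP.
  have [c [Hc Ec]] := In_map HP'.
  subst P.
  have [b Hb] := IH c Hc _ _ _ HPs HK0 Hv.
  have [i Hi Ei] := In_nthP (PN Sx cs) Hc.
  exists (i :: b); rewrite occ_PN //.
  by rewrite Ei.
move=> [ss [HF Hs]] HK.
have Hin : K \in flatten ss by case: Hs HK => -> //; rewrite mem_flatten_rev.
case/flattenP: Hin => s0 Hs0 HK0 Hv.
have [P [HP HPs]] := Forall2_In_r HF (proj2 (InE _ _) Hs0).
have [p [Hp Ep]] := In_map HP; subst P.
have [i Hi Ei] := In_nthP (set0, None) Hp.
clear HP; case: p HPs Hp Ei => S [c|] /= HPs Hp Ei.
  case: HPs => s' [Hs' Es0]; subst s0.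
  case/mapP: HK0 => L HL EK; subst K.
  rewrite inE in Hv; case/orP: Hv => Hv.
    by exists [::]; rewrite /occ /=; apply: (has_sec Hp).
  have [b Hb] := IH S c Hp _ _ _ Hs' HL Hv.
  by exists (i :: b); rewrite (occ_QN _ _ (c:=c)) ?Ei.
subst s0; move: HK0; rewrite inE => /eqP EK; subst K.
by exists [::]; rewrite /occ /=; apply: (has_sec Hp).
Qed.


Lemma Forall2_leaves (l : seq (mpq T)) :
  (forall c, List.In c l -> is_order c (leaves c)) ->
  List.Forall2 (fun P x => P x) (map (@is_order T) l) (map (@leaves T) l).
Proof.
elim: l => [|c l IH] H /=; constructor; first by apply: H; left.
by apply: IH => c' Hc'; apply: H; right.
Qed.

Lemma order_leaves (c : mpq T) : is_order c (leaves c).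
Proof.
elim/mpq_ind': c => [Sx cs IH|secs IH].
  case: cs IH => [|c0 cs'] IH //=.
  exists (map (@is_order T) (c0 :: cs')), (map (@leaves T) (c0 :: cs')).
  split; first exact: Permutation_refl.
  split; first exact: Forall2_leaves.
  by rewrite -map_comp.
exists (map (fun p : {set T} * option (mpq T) => match p.2 with
                             | None => [:: p.1]
                             | Some c => map (setU p.1) (leaves c)
                             end) secs).
split; last by left.
elim: secs IH => [|[S [c|]] secs IHs] IH /=; constructor.
- by exists (leaves c); split => //; apply: (IH S c); left.
- by apply: IHs => S' c' H; apply: (IH S' c'); right.
- done.
- by apply: IHs => S' c' H; apply: (IH S' c'); right.
Qed.

Lemma pn_elim (Sx : {set T}) c0 cs' s : let cs := c0 :: cs' in
  is_order (PN Sx cs) s ->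
  exists ss_al ss, [/\ Permutation ss ss_al, size ss_al = size cs,
    (forall m, m < size cs -> is_order (nth (PN Sx cs) cs m) (nth [::] ss_al m)) &
    s = flatten (map (map (setU Sx)) ss)].
Proof.
move=> cs [Ps' [ss [Hperm [HF ->]]]].
have [ss_al [Hp HF']] := Permutation_Forall2 (Permutation_sym Hperm) HF.
have [Hsz Hn] := Forall2_nth (fun _ => True) [::] HF'.
exists ss_al, ss; split => //; first by rewrite -Hsz size_map.
move=> m Hm; have := Hn m; rewrite size_map => /(_ Hm).
by rewrite (nth_map (PN Sx cs)).
Qed.

Definition qpred (p : {set T} * option (mpq T)) : seq {set T} -> Prop :=
  match p.2 with
  | None => fun s => s = [:: p.1]
  | Some c => fun s => exists s', is_order c s' /\ s = map (setU p.1) s'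
  end.

Lemma qn_elim (secs : seq ({set T} * option (mpq T))) s : is_order (QN secs) s ->
  exists ss, [/\ size ss = size secs, s = flatten ss \/ s = flatten (rev ss) &
    forall m, m < size secs -> qpred (nth (set0, None) secs m) (nth [::] ss m)].
Proof.
move=> [ss [HF Hs]].
have [Hsz Hn] := Forall2_nth (fun _ => True) [::] HF.
exists ss; split => //; first by rewrite -Hsz size_map.
move=> m Hm; have := Hn m; rewrite size_map => /(_ Hm).
by rewrite (nth_map (set0, None)).
Qed.

Lemma qblock (secs : seq ({set T} * option (mpq T))) m X K v : m < size secs -> qpred (nth (set0, None) secs m) X ->
  K \in X -> sec secs m \subset K /\
  (v \in K -> v \in sec secs m \/ exists b0, occ (QN secs) (m :: b0) v).
Proof.
rewrite /qpred /sec => Hm; case E: (nth _ secs m).2 => [c|].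
  case=> s' [Hs' ->] /mapP [L HL ->]; split; first exact: subsetUl.
  rewrite inE => /orP [->|Hv]; first by left.
  have [b Hb] := order_occ Hs' HL Hv.
  by right; exists b; rewrite (occ_QN _ _ E).
by move=> -> ; rewrite inE => /eqP ->; split => // ->; left.
Qed.

Lemma qpred_ne (secs : seq ({set T} * option (mpq T))) m X : m < size secs -> qpred (nth (set0, None) secs m) X ->
  (forall c, (nth (set0, None) secs m).2 = Some c ->
     forall s', is_order c s' -> s' != [::]) -> X != [::].
Proof.
rewrite /qpred => Hm; case E: (nth _ secs m).2 => [c|] //.
  by case=> s' [Hs' ->] H; rewrite -size_eq0 size_map size_eq0; exact: H c erefl s' Hs'.
by move=> ->.
Qed.

Lemma order_ne (c : mpq T) : forall s,
  (forall b secs, subtree c b = Some (QN secs) -> 0 < size secs) ->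
  is_order c s -> s != [::].
Proof.
elim/mpq_ind': c => [Sx cs IH|secs IH] s Hq.
  case: cs IH Hq => [|c0 cs'] IH Hq; first by move=> /= ->.
  case/pn_elim=> ss_al [ss [Hp Hsz Hn ->]].
  have H0 := Hn 0 erefl.
  have Hne : nth [::] ss_al 0 != [::].
    apply: (IH c0); first by left.
    by move=> b secs Hb; apply: (Hq (0 :: b)).
    exact: H0.
  have Hin : List.In (nth [::] ss_al 0) ss.
    apply: (Permutation_in _ (Permutation_sym Hp)); apply: nth_In; by rewrite Hsz.
  case: (nth [::] ss_al 0) Hne Hin => // K0 l _ Hin.
  have : Sx :|: K0 \in flatten (map (map (setU Sx)) ss).
    apply/flattenP; exists (map (setU Sx) (K0 :: l)); last by rewrite inE eqxx.
    by apply/mapP; exists (K0 :: l) => //; apply/InE.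
  by case: (flatten _).
case/qn_elim=> ss [Hsz Hs Hn].
have Hpos := Hq [::] secs erefl.
have Hne : nth [::] ss 0 != [::].
  apply: (qpred_ne Hpos (Hn 0 Hpos)) => c Ec s' Hs'.
  apply: (IH (nth (set0, None) secs 0).1 c).
  - by rewrite -Ec -surjective_pairing; exact: nth_In.
  - move=> b secs' Hb; apply: (Hq (0 :: b)); by rewrite /= Ec.
  - exact: Hs'.
have Hin : nth [::] ss 0 \in ss by apply: mem_nth; rewrite Hsz.
case: (nth [::] ss 0) Hne Hin => // K0 l _ Hin.
have : K0 \in flatten ss by apply/flattenP; exists (K0 :: l); rewrite ?inE ?eqxx.
case: Hs => ->; last rewrite -mem_flatten_rev; by case: (flatten _).
Qed.


Definition NP (t : mpq T) (b : seq nat) (v : T) :=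
  exists b0, occ t b0 v /\ take (size b) b0 != b.

Lemma NP_root (t : mpq T) i b v : occ t [::] v -> NP t (i :: b) v.
Proof. by move=> H; exists [::]. Qed.

Lemma NP_other (t : mpq T) m b0 i b v : occ t (m :: b0) v -> m != i -> NP t (i :: b) v.
Proof. by move=> H Hm; exists (m :: b0); split => //=; rewrite eqseq_cons negb_and Hm. Qed.

Lemma NP_PN Sx (cs : seq (mpq T)) i b v : i < size cs ->
  NP (nth (PN Sx cs) cs i) b v -> NP (PN Sx cs) (i :: b) v.
Proof.
move=> Hi [b0 [Hb0 Hne]]; exists (i :: b0); split; first by rewrite occ_PN.
by rewrite /= eqseq_cons eqxx.
Qed.

Lemma NP_QN (secs : seq ({set T} * option (mpq T))) i c b v :
  (nth (set0, None) secs i).2 = Some c -> NP c b v -> NP (QN secs) (i :: b) v.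
Proof.
move=> Hi [b0 [Hb0 Hne]]; exists (i :: b0); split; first by rewrite (occ_QN _ _ Hi).
by rewrite /= eqseq_cons eqxx.
Qed.

Lemma mem_take_drop (A : eqType) (d : A) (l : seq A) i z :
  z \in take i l ++ drop i.+1 l -> exists m, [/\ m < size l, m != i & nth d l m = z].
Proof.
rewrite mem_cat => /orP [] /(nthP d) [m Hm <-].
  rewrite size_take_min in Hm; have Hmi : m < i by lia.
  exists m; rewrite nth_take //; split => //; lia.
rewrite size_drop in Hm; exists (i.+1 + m); rewrite nth_drop; split => //; lia.
Qed.

Lemma perm_cat_inv (A : Type) (l1 l2 l3 l4 : seq A) z :
  Permutation (l1 ++ z :: l2) (l3 ++ z :: l4) -> Permutation (l1 ++ l2) (l3 ++ l4).
Proof. exact: Permutation_app_inv. Qed.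

Lemma occ_root_QN (secs : seq ({set T} * option (mpq T))) m v :
  m < size secs -> v \in sec secs m -> occ (QN secs) [::] v.
Proof. by move=> Hm Hv; rewrite /occ /=; apply/(has_nthP (set0, None)); exists m. Qed.

Lemma decomp (t : mpq T) b : forall n s, is_order t s -> subtree t b = Some n ->
  exists pre post A s', [/\ s = pre ++ map (setU A) s' ++ post, is_order n s',
    (forall v, v \in A -> NP t b v) &
    (forall K, K \in pre ++ post -> forall v, v \in K -> NP t b v)].
Proof.
elim: b t => [|i b IH] t n s Hs /=.
  case=> <-; exists [::], [::], set0, s; split => //=.
  - by rewrite cats0 map_id_in // => K _; rewrite set0U.
  - by move=> v; rewrite inE.
case: t Hs => [Sx cs|secs] Hs.
  case: ifP => // Hi Hsub.
  case: cs Hs Hi Hsub => [|c0 cs'] // Hs Hi Hsub.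
  have [ss_al [ss [Hp Hsz Hn Es]]] := pn_elim Hs.
  have [pre' [post' [A' [s' [Es' Hs' HA' Hpp']]]]] := IH _ n _ (Hn i Hi) Hsub.
  set cs := c0 :: cs' in Hs Hi Hsub Hp Hsz Hn Es HA' Hpp' *.
  set sc := nth [::] ss_al i in Es'.
  have Hal : ss_al = take i ss_al ++ sc :: drop i.+1 ss_al.
    by rewrite /sc -drop_nth ?cat_take_drop // Hsz.
  have Hin : List.In sc ss.
    apply: (Permutation_in _ (Permutation_sym Hp)); rewrite Hal; exact: List.in_elt.
  have [ss1 [ss2 Ess]] := List.in_split _ _ Hin.
  have Ess' : ss = ss1 ++ sc :: ss2 := Ess.
  have Hp2 : Permutation (ss1 ++ ss2) (take i ss_al ++ drop i.+1 ss_al).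
    apply: (@perm_cat_inv _ _ _ _ _ sc); rewrite -Ess' -Hal; exact: Hp.
  have Hother : forall K, K \in flatten (map (map (setU Sx)) (ss1 ++ ss2)) ->
      forall v, v \in K -> NP (PN Sx cs) (i :: b) v.
    move=> K /flattenP [sK /mapP [s0 Hs0 ->] /mapP [K0 HK0 ->]] v.
    rewrite inE => /orP [Hv|Hv]; first exact: NP_root.
    have Hs0' : s0 \in take i ss_al ++ drop i.+1 ss_al.
      by apply/InE; apply: (Permutation_in _ Hp2); apply/InE.
    have [m [Hm Hmi Em]] := mem_take_drop [::] Hs0'.
    have Hm' : m < size cs by rewrite -Hsz.
    have := Hn m Hm'; rewrite Em => Ho.
    have [b0 Hb0] := order_occ Ho HK0 Hv.
    apply: (NP_other (m := m) (b0 := b0)); last by [].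
    by rewrite occ_PN.
  exists (flatten (map (map (setU Sx)) ss1) ++ map (setU Sx) pre'),
         (map (setU Sx) post' ++ flatten (map (map (setU Sx)) ss2)),
         (Sx :|: A'), s'.
  split => //.
  - rewrite Es Ess' map_cat flatten_cat /= Es' !map_cat -!catA.
    congr (_ ++ _); congr (_ ++ _); congr (_ ++ _).
    by rewrite -map_comp; apply: eq_map => K /=; rewrite setUA.
  - move=> v; rewrite inE => /orP [Hv|Hv]; first exact: NP_root.
    exact: (NP_PN Hi (HA' v Hv)).
  - move=> K; rewrite !mem_cat -!orbA => /or4P [H|H|H|H] v Hv.
    + by apply: (Hother K) => //; rewrite map_cat flatten_cat mem_cat H.
    + case/mapP: H => K' HK' EK; move: Hv; rewrite EK inE => /orP [Hv|Hv].
        exact: NP_root.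
      by apply: (NP_PN Hi); apply: (Hpp' K') => //; rewrite mem_cat HK'.
    + case/mapP: H => K' HK' EK; move: Hv; rewrite EK inE => /orP [Hv|Hv].
        exact: NP_root.
      by apply: (NP_PN Hi); apply: (Hpp' K') => //; rewrite mem_cat HK' orbT.
    + by apply: (Hother K) => //; rewrite map_cat flatten_cat mem_cat H orbT.
case E: (nth (set0, None) secs i).2 => [c|] // Hsub.
have Hi : i < size secs.
  by rewrite ltnNge; apply/negP => H; move: E; rewrite nth_default.
have [ss [Hsz Hs' Hn]] := qn_elim Hs.
have := Hn i Hi; rewrite /qpred E => -[sc [Hsc Esc]].
have [pre' [post' [A' [s' [Es' Hs'' HA' Hpp']]]]] := IH _ n _ Hsc Hsub.
set Si := (nth (set0, None) secs i).1 in Esc.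
have Hss : ss = take i ss ++ nth [::] ss i :: drop i.+1 ss.
  by rewrite -drop_nth ?cat_take_drop // Hsz.
have Hother : forall K, K \in flatten (take i ss) ++ flatten (drop i.+1 ss) ->
    forall v, v \in K -> NP (QN secs) (i :: b) v.
  move=> K; rewrite -flatten_cat => /flattenP [s0 Hs0 HK0] v Hv.
  have [m [Hm Hmi Em]] := mem_take_drop [::] Hs0.
  rewrite Hsz in Hm.
  have HK : K \in nth [::] ss m by rewrite Em.
  have [_ H] := qblock v Hm (Hn m Hm) HK.
  case: (H Hv) => [Hv'|[b0 Hb0]].
  - by apply: NP_root; apply: (occ_root_QN Hm).
  - by apply: (NP_other (m := m) (b0 := b0)); [exact: Hb0 | exact: Hmi].
have HA : forall v, v \in Si :|: A' -> NP (QN secs) (i :: b) v.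
  move=> v; rewrite inE => /orP [Hv|Hv]; first by apply: NP_root; apply: (occ_root_QN Hi).
  exact: (NP_QN E (HA' v Hv)).
have Hmid : map (setU Si) (pre' ++ map (setU A') s' ++ post') =
    map (setU Si) pre' ++ map (setU (Si :|: A')) s' ++ map (setU Si) post'.
  rewrite !map_cat; congr (_ ++ (_ ++ _)).
  by rewrite -map_comp; apply: eq_map => K /=; rewrite setUA.
have Hpp : forall K, K \in map (setU Si) (pre' ++ post') ->
    forall v, v \in K -> NP (QN secs) (i :: b) v.
  move=> K /mapP [K' HK' ->] v; rewrite inE => /orP [Hv|Hv].
    by apply: NP_root; apply: (occ_root_QN Hi).
  exact: (NP_QN E (Hpp' K' HK' v Hv)).
case: Hs' => Es.
  exists (flatten (take i ss) ++ map (setU Si) pre'),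
         (map (setU Si) post' ++ flatten (drop i.+1 ss)), (Si :|: A'), s'.
  split => //.
  - by rewrite Es {1}Hss flatten_cat /= Esc Es' Hmid -!catA.
  - move=> K; rewrite !mem_cat -!orbA => /or4P [H|H|H|H].
    + by apply: Hother; rewrite mem_cat H.
    + by apply: Hpp; rewrite map_cat mem_cat H.
    + by apply: Hpp; rewrite map_cat mem_cat H orbT.
    + by apply: Hother; rewrite mem_cat H orbT.
exists (flatten (rev (drop i.+1 ss)) ++ map (setU Si) pre'),
       (map (setU Si) post' ++ flatten (rev (take i ss))), (Si :|: A'), s'.
split => //.
- by rewrite Es {1}Hss rev_cat rev_cons cat_rcons !flatten_cat /= Esc Es' Hmid -!catA.
- move=> K; rewrite !mem_cat -!orbA => /or4P [H|H|H|H].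
  + by apply: Hother; rewrite mem_flatten_rev in H; rewrite mem_cat H orbT.
  + by apply: Hpp; rewrite map_cat mem_cat H.
  + by apply: Hpp; rewrite map_cat mem_cat H orbT.
  + by apply: Hother; rewrite mem_flatten_rev in H; rewrite mem_cat H.
Qed.

End Tree.

Section Graph.
Variable T : finType.
Variable e : rel T.
Hypothesis He : interval_graph e.

Lemma esym u v : e u v = e v u.
Proof.
case: He => lo [hi [_ H]]; apply/idP/idP => /H [Hne Hm]; apply/H;
  by rewrite eq_sym maxnC minnC.
Qed.

Lemma eirr u : e u u = false.
Proof. by case: He => lo [hi [_ H]]; apply/negP => /H [/eqP]. Qed.

Definition cliqueb (K : {set T}) :=
  [forall u, forall v, (u \in K) ==> (v \in K) ==> (u != v) ==> e u v].

Lemma cliqueP K : reflect (clique e K) (cliqueb K).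
Proof.
apply: (iffP forallP) => [H u v Hu Hv Huv|H u].
  by have := forallP (H u) v; rewrite Hu Hv Huv.
by apply/forallP => v; apply/implyP => Hu; apply/implyP => Hv; apply/implyP; apply: H.
Qed.

Lemma mc_ext C : clique e C -> exists K, max_clique e K /\ C \subset K.
Proof.
move=> HC.
have P0 : cliqueb C && (C \subset C) by rewrite subxx andbT; apply/cliqueP.
case: (@arg_maxnP _ C (fun K => cliqueb K && (C \subset K)) (fun K : {set T} => #|K|) P0) => K /andP [/cliqueP HK HCK] Hmax.
exists K; split => //; split => // K' HK' HKK'.
apply/eqP; rewrite eq_sym eqEcard HKK' /=.
apply: Hmax; rewrite (subset_trans HCK HKK') andbT; exact/cliqueP.
Qed.

Lemma mc_in K v : max_clique e K -> (forall w, w \in K -> w != v -> e v w) -> v \in K.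
Proof.
move=> [HK Hmax] Hv.
have HK' : clique e (v |: K).
  move=> u w; rewrite !inE => /orP [/eqP->|Hu] /orP [/eqP->|Hw] Huw.
  - by rewrite eqxx in Huw.
  - by apply: Hv; rewrite // eq_sym.
  - by rewrite esym; apply: Hv.
  - exact: HK.
by rewrite -(Hmax _ HK' (subsetUr _ _)) setU11.
Qed.

Lemma mc_out K v : max_clique e K -> v \notin K -> exists w, [/\ w \in K, w != v & ~~ e v w].
Proof.
move=> HK Hv.
case: (boolP [exists w, [&& w \in K, w != v & ~~ e v w]]).
  by case/existsP => w /and3P [H1 H2 H3]; exists w.
rewrite negb_exists => /forallP H; case/negP: Hv; apply: mc_in => // w Hw Hwv.
by have := H w; rewrite Hw Hwv /= negbK.
Qed.

Lemma mc_pair u v : e u v -> exists K, [/\ max_clique e K, u \in K & v \in K].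
Proof.
move=> Huv.
have HC : clique e [set u; v].
  move=> a b; rewrite !inE => /orP [] /eqP -> /orP [] /eqP -> //; rewrite ?eqxx //.
  by rewrite esym.
have [K [HK Hs]] := mc_ext HC.
exists K; split => //; apply: (subsetP Hs); rewrite !inE eqxx ?orbT //.
Qed.

End Graph.

Lemma pw_mid (A : eqType) (r : rel A) (l1 l2 l3 l4 : seq A) u v :
  pairwise r (l1 ++ (l2 ++ l3) ++ l4) -> u \in l2 -> v \in l3 -> r u v.
Proof.
rewrite pairwise_cat => /and3P [_ _]; rewrite pairwise_cat => /and3P [_ + _].
by rewrite pairwise_cat => /and3P [/allrelP H _ _]; apply: H.
Qed.

Ltac lia' := repeat match goal with
  | H : is_true (_ \in _) |- _ => clear H
  | H : max_clique _ _ |- _ => clear H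
  | H : forall _, _ |- _ => clear H
  | H : (_ \in _) = _ |- _ => clear H
  | H : _ = _ :> seq _ |- _ => clear H
  end; lia.

Section Main.
Variables (T : finType) (e : rel T) (t : mpq T) (x y q : T)
    (ax rest : seq nat) (secs : seq ({set T} * option (mpq T)))
    (a lx rx : nat).
Hypotheses (He : interval_graph e) (Ht : is_MPQ_tree e t) (Exy : e x y)
  (Hsub : subtree t ax = Some (QN secs)) (Hxocc : occ t ax x)
  (Hrx : rx < size secs)
  (Hx : forall i, i < size secs -> (x \in sec secs i <-> lx <= i <= rx))
  (Hyocc : occ t (ax ++ a :: rest) y) (Ha : lx < a < rx)
  (Hqa : q \in sec secs a) (Hqlx : q \notin sec secs lx) (Hqrx : q \notin sec secs rx).

Lemma occ_uniq v b1 b2 : occ t b1 v -> occ t b2 v -> b1 = b2.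
Proof.
case: Ht => Hu _ _ _ _ H1 H2; case: (Hu v) => b0 [_ H].
by rewrite -(H b1) // -(H b2).
Qed.

Lemma NP_false v b1 : occ t b1 v -> take (size ax) b1 = ax -> NP t ax v -> False.
Proof. by move=> H1 H2 [b0 [H0 Hne]]; rewrite (occ_uniq H0 H1) H2 eqxx in Hne. Qed.

Lemma occ_ax_sec v i : i < size secs -> v \in sec secs i -> occ t ax v.
Proof. by move=> Hi Hv; rewrite /occ Hsub; apply/(has_nthP (set0, None)); exists i. Qed.

Lemma Ha_size : a < size secs.
Proof. by case/andP: Ha => _ H; apply: ltn_trans H Hrx. Qed.

Lemma Hqocc : occ t ax q.
Proof. exact: occ_ax_sec Ha_size Hqa. Qed.

Lemma x_in i : i < size secs -> lx <= i <= rx -> x \in sec secs i.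
Proof. by move=> Hi H; apply/(Hx Hi). Qed.

Lemma q_range : exists l r, l < r /\ [/\ lx < l, l <= a, a <= r, r < rx &
  forall i, i < size secs -> (q \in sec secs i <-> l <= i <= r)].
Proof.
case: Ht => _ HQ _ _ _.
case: (HQ _ _ Hsub) => _ Hint _ _ _.
have Hh : has (fun p : {set T} * option (mpq T) => q \in p.1) secs.
  by apply/(has_nthP (set0, None)); exists a => //; exact: Ha_size.
have [l [r [Hlr Hrk H]]] := Hint q Hh.
exists l, r.
have Hlx : lx < size secs by case/andP: Ha => H1 H2; lia'.
have := (H a Ha_size).1 Hqa; have := contra (H lx Hlx).2 Hqlx;
have := contra (H rx Hrx).2 Hqrx; case/andP: Ha => H1 H2.
rewrite /sec; move=> /negP A1 /negP A2 /andP [A3 A4]; split => //; split => //.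
- rewrite ltnNge; apply/negP => Hc; apply: A2; apply/andP; split => //; lia'.
- rewrite ltnNge; apply/negP => Hc; apply: A1; apply/andP; split => //; lia'.
Qed.

Lemma loc (K : {set T}) v b1 : max_clique e K -> v \in K -> occ t b1 v -> take (size ax) b1 = ax ->
  exists i, [/\ i < size secs, sec secs i \subset K &
    v \in sec secs i \/ exists b0, occ t (ax ++ i :: b0) v].
Proof.
move=> HK Hv Hb1 Hpre.
case: Ht => _ _ _ [_ Hleaves] _.
have HK' : K \in leaves t by apply/Hleaves.
have [pre [post [A [s' [Es Hs' HA Hpp]]]]] := decomp (order_leaves t) Hsub.
move: HK'; rewrite Es !mem_cat => /or3P [H|H|H].
- by exfalso; apply: (NP_false Hb1 Hpre); apply: (Hpp K) => //; rewrite mem_cat H.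
- case/mapP: H => K0 HK0 EK; subst K.
  move: Hv; rewrite inE => /orP [Hv|Hv]; first by exfalso; exact: (NP_false Hb1 Hpre (HA v Hv)).
  have [ss [Hsz Hss Hn]] := qn_elim Hs'.
  have HK0' : K0 \in flatten ss by case: Hss HK0 => -> //; rewrite mem_flatten_rev.
  case/flattenP: HK0' => s0 Hs0 HK0s.
  case/(nthP [::]): Hs0 => m Hm Em.
  rewrite Hsz in Hm.
  have HK0m : K0 \in nth [::] ss m by rewrite Em.
  have [Hsb Hv'] := qblock v Hm (Hn m Hm) HK0m.
  exists m; split => //; first exact: (subset_trans Hsb (subsetUr _ _)).
  case: (Hv' Hv) => [->|[b0 Hb0]]; [by left | right; exists b0].
  by rewrite (occ_cat _ _ Hsub).
- by exfalso; apply: (NP_false Hb1 Hpre); apply: (Hpp K) => //; rewrite mem_cat H orbT.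
Qed.

Lemma size_ne (b1 b2 : seq nat) : b1 = b2 -> size b1 = size b2.
Proof. by move=> ->. Qed.

Lemma FY (K : {set T}) : max_clique e K -> y \in K -> x \in K /\ q \in K.
Proof.
move=> HK Hy.
have [i [Hi Hs Hyi]] := loc HK Hy Hyocc (take_size_cat _ erefl).
have Hia : i = a.
  case: Hyi => [Hys|[b0 Hb0]].
    have := occ_uniq (occ_ax_sec Hi Hys) Hyocc => /size_ne; rewrite size_cat /=; lia'.
  have := occ_uniq Hb0 Hyocc => /(f_equal (drop (size ax))); rewrite !drop_size_cat //.
  by case.
subst i; split; apply: (subsetP Hs) => //.
apply: x_in => //; case/andP: Ha => H1 H2; lia'.
Qed.

Lemma FQ (K : {set T}) : max_clique e K -> q \in K -> x \in K.
Proof.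
move=> HK Hq.
have [i [Hi Hs Hqi]] := loc HK Hq Hqocc (take_size ax).
have [l [r [_ [H1 H2 H3 H4 H5]]]] := q_range.
case: Hqi => [Hqs|[b0 Hb0]].
  apply: (subsetP Hs); apply: x_in => //.
  by move/(H5 i Hi): Hqs => /andP [A1 A2]; lia'.
by have := occ_uniq Hb0 Hqocc => /size_ne; rewrite size_cat /=; lia'.
Qed.

Lemma xy_ne : x != y.
Proof. by apply/eqP => E; move: Exy; rewrite E eirr. Qed.

Lemma qx_ne : q != x.
Proof.
apply/eqP => E; move: Hqlx; rewrite E (x_in _) //; case/andP: Ha => H1 H2; lia'.
Qed.

Lemma qy_ne : q != y.
Proof.
apply/eqP => E; have := Hqocc; rewrite E => /occ_uniq /(_ Hyocc) /size_ne; rewrite size_cat /=; lia'.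
Qed.

Lemma Kxy : exists K, [/\ max_clique e K, x \in K, y \in K & q \in K].
Proof.
have [K [HK Hx' Hy']] := mc_pair He Exy; exists K; split => //.
by case: (FY HK Hy').
Qed.

Lemma e_qy : e q y.
Proof.
have [K [HK _ Hy' Hq']] := Kxy; case: HK => HK _; exact: HK qy_ne.
Qed.

Lemma e_qx : e q x.
Proof.
have [K [HK Hx' _ Hq']] := Kxy; case: HK => HK _; exact: HK qx_ne.
Qed.

Variables (lo hi : T -> nat).
Hypotheses (Hlh : forall v, lo v <= hi v)
  (Hm : forall u v, remove_edge e x y u v <-> [/\ u != v, lo u <= hi v & lo v <= hi u])
  (Hyx : hi y < lo x).

Lemma rem_ok u v : e u v -> ~~ ((u == x) && (v == y) || (u == y) && (v == x)) ->
  lo u <= hi v /\ lo v <= hi u.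
Proof. by move=> H1 H2; have [_ A B] := (Hm u v).1 (introT andP (conj H1 H2)). Qed.

Lemma meet_e u v : u != v -> lo u <= hi v -> lo v <= hi u -> e u v.
Proof. by move=> H1 H2 H3; have := (Hm u v).2 (And3 H1 H2 H3); case/andP. Qed.

Lemma qy_meet : lo q <= hi y /\ lo y <= hi q.
Proof.
apply: (rem_ok e_qy); apply/negP => /orP [] /andP [/eqP E _].
  by move: qx_ne; rewrite E eqxx.
by move: qy_ne; rewrite E eqxx.
Qed.

Lemma qx_meet : lo q <= hi x /\ lo x <= hi q.
Proof.
apply: (rem_ok e_qx); apply/negP => /orP [] /andP [/eqP E _].
  by move: qx_ne; rewrite E eqxx.
by move: qy_ne; rewrite E eqxx.
Qed.

Definition Kp (K : {set T}) := if y \in K then K :\ x else K.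
Definition pt (K : {set T}) := \max_(v | v \in Kp K) lo v.

Lemma Kp_sub (K : {set T}) w : w \in Kp K -> w \in K.
Proof. by rewrite /Kp; case: ifP => // _; rewrite inE => /andP []. Qed.

Lemma Kp_in (K : {set T}) w : w \in K -> w != x -> w \in Kp K.
Proof. move=> H1 H2; rewrite /Kp; case: ifP => _ //; by rewrite !inE H2 H1. Qed.

Lemma Kp_noy (K : {set T}) : y \notin K -> Kp K = K.
Proof. by rewrite /Kp => /negbTE ->. Qed.

Lemma Kp_pair (K : {set T}) u v : u \in Kp K -> v \in Kp K ->
  ~~ ((u == x) && (v == y) || (u == y) && (v == x)).
Proof.
rewrite /Kp; case: ifP => Hy.
  by rewrite !inE => /andP [Hux _] /andP [Hvx _]; rewrite (negbTE Hux) (negbTE Hvx) /= andbF.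
move=> Hu Hv; apply/negP => /orP [] /andP [/eqP Eu /eqP Ev].
  by move: Hv; rewrite Ev Hy.
by move: Hu; rewrite Eu Hy.
Qed.

Lemma pt_in (K : {set T}) w : max_clique e K -> w \in Kp K -> lo w <= pt K <= hi w.
Proof.
move=> [HK _] Hw; apply/andP; split; first exact: (leq_bigmax_cond w).
apply/bigmax_leqP => v Hv.
case: (eqVneq v w) => [->|Hvw]; first exact: Hlh.
have [A1 A2] := rem_ok (HK v w (Kp_sub Hv) (Kp_sub Hw) Hvw) (Kp_pair Hv Hw).
exact: A1.
Qed.

Lemma pt_adj (K : {set T}) v : max_clique e K -> lo v <= pt K -> pt K <= hi v ->
  forall w, w \in Kp K -> w != v -> e v w.
Proof.
move=> HK H1 H2 w Hw Hwv; have /andP [A1 A2] := pt_in HK Hw.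
apply: meet_e; [by rewrite eq_sym | lia' | lia'].
Qed.

Lemma cons3 (K1 K2 K3 : {set T}) v : max_clique e K1 -> max_clique e K2 -> max_clique e K3 ->
  pt K1 <= pt K2 -> pt K2 <= pt K3 -> v \in K1 -> v \in K3 -> v \in K2.
Proof.
move=> HK1 HK2 HK3 H12 H23 Hv1 Hv3.
have yx : y != x by rewrite eq_sym xy_ne.
case: (eqVneq v x) => [Evx|Hvx].
  subst v.
  case Hy2: (y \in K2); first by case: (FY HK2 Hy2).
  have Hp2 : Kp K2 = K2 by rewrite Kp_noy ?Hy2.
  suff [H1 H2] : lo x <= pt K2 /\ pt K2 <= hi x.
    apply: (mc_in He HK2) => w Hw Hwx; apply: (pt_adj HK2 H1 H2) => //; by rewrite Hp2.
  split.
    rewrite leqNgt; apply/negP => Hlt.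
    case Hy1 : (y \in K1).
      have /andP [Hl1 _] := pt_in HK1 (Kp_in Hy1 yx).
      case: (leqP (pt K2) (hi y)) => Hc.
        suff : y \in K2 by rewrite Hy2.
        apply: (mc_in He HK2) => w Hw Hwy; apply: (pt_adj HK2 _ Hc) => //; [lia' | by rewrite Hp2].
      have [Q1 _] := qy_meet; have [_ Q2] := qx_meet.
      have Hq2 : q \in K2.
        apply: (mc_in He HK2) => w Hw Hwq; apply: (pt_adj HK2) => //; [lia' | lia' | by rewrite Hp2].
      have Hx2 : x \in Kp K2 by rewrite Hp2; exact: FQ HK2 Hq2.
      have /andP [A1 _] := pt_in HK2 Hx2.
      lia'.
    have Hx1 : x \in Kp K1 by rewrite Kp_noy ?Hy1.
    have /andP [A1 _] := pt_in HK1 Hx1; lia'.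
  case Hy3 : (y \in K3).
    have /andP [_ A1] := pt_in HK3 (Kp_in Hy3 yx); have := Hlh x; lia'.
  have Hx3 : x \in Kp K3 by rewrite Kp_noy ?Hy3.
  have /andP [_ A1] := pt_in HK3 Hx3; lia'.
have /andP [B1 _] := pt_in HK1 (Kp_in Hv1 Hvx).
have /andP [_ B2] := pt_in HK3 (Kp_in Hv3 Hvx).
have L1 : lo v <= pt K2 by lia'.
have L2 : pt K2 <= hi v by lia'.
case Hy2: (y \in K2).
  case: (eqVneq v y) => [->//|Hvy].
  have Evy : e v y by apply: (pt_adj HK2 L1 L2 (Kp_in Hy2 yx)); rewrite eq_sym.
  have [K [HK Hv' Hy']] := mc_pair He Evy.
  have Evx : e v x by case: (FY HK Hy') => Hx' _; case: HK => HK _; exact: HK.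
  apply: (mc_in He HK2) => w Hw Hwv.
  case: (eqVneq w x) => [->//|Hwx].
  exact: (pt_adj HK2 L1 L2 (Kp_in Hw Hwx) Hwv).
apply: (mc_in He HK2) => w Hw Hwv.
by apply: (pt_adj HK2 L1 L2) => //; rewrite Kp_noy ?Hy2.
Qed.


Lemma final : False.
Proof.
case: Ht => Huniq HQ _ [Hluniq Hleaves] Hord.
pose r := [rel K1 K2 : {set T} | pt K1 <= pt K2].
have r_trans : transitive r by move=> K2 K1 K3 /= H1 H2; exact: leq_trans H1 H2.
have r_refl : reflexive r by move=> K /=.
have r_tot : total r by move=> K1 K2 /=; exact: leq_total.
set s := sort r (leaves t).
have Hmem : forall K, (K \in s) = (K \in leaves t) by move=> K; rewrite mem_sort.
have Hmc : forall K, K \in s -> max_clique e K by move=> K; rewrite Hmem => /Hleaves.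
have Hsorted : sorted r s := sort_sorted r_tot _.
have Hcons : consec s.
  move=> v i j k Hij Hjk Hk Hvi Hvk.
  have Hjs : j < size s by lia'.
  have His : i < size s by lia'.
  have Hle := sorted_leq_nth r_trans r_refl set0 Hsorted.
  apply: (cons3 (Hmc _ (mem_nth _ His)) (Hmc _ (mem_nth _ Hjs)) (Hmc _ (mem_nth _ Hk)) _ _ Hvi Hvk).
  - exact: (Hle i j His Hjs Hij).
  - exact: (Hle j k Hjs Hk Hjk).
have Hs : is_order t s.
  apply/Hord; split; [by rewrite sort_uniq | | exact: Hcons].
  by move=> K; rewrite Hmem; exact: Hleaves.
have [pre [post [A [s' [Es Hs' HA Hpp]]]]] := decomp Hs Hsub.
have [ss [Hsz Hss Hn]] := qn_elim Hs'.
have Hpick : forall i, i < size secs -> exists K0, K0 \in nth [::] ss i.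
  move=> i Hi.
  have : nth [::] ss i != [::].
    apply: (qpred_ne Hi (Hn i Hi)) => c Ec s2 Hs2.
    apply: (order_ne _ Hs2) => b secs' Hb.
    have Hb' : subtree t (ax ++ i :: b) = Some (QN secs') by rewrite subtree_cat Hsub /= Ec.
    by case: (HQ _ _ Hb') => H3 _ _ _ _; lia'.
  by case: (nth [::] ss i) => [|K0 l] // _; exists K0; rewrite mem_head.
have Hins : forall i K0, i < size secs -> K0 \in nth [::] ss i -> A :|: K0 \in s.
  move=> i K0 Hi HK0; rewrite Es !mem_cat; apply/orP; right; apply/orP; left.
  apply/mapP; exists K0 => //.
  have Hin : nth [::] ss i \in ss by apply: mem_nth; rewrite Hsz.
  by case: Hss => ->; rewrite ?mem_flatten_rev; apply/flattenP; exists (nth [::] ss i).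
have Hnoy : forall i K0, i < size secs -> i != a -> K0 \in nth [::] ss i -> y \notin A :|: K0.
  move=> i K0 Hi Hia HK0; rewrite inE negb_or; apply/andP; split.
    apply/negP => H; apply: (NP_false Hyocc _ (HA y H)); exact: take_size_cat.
  apply/negP => H; have [_ Hy'] := qblock y Hi (Hn i Hi) HK0.
  case: (Hy' H) => [Hys|[b0 Hb0]].
    have := occ_uniq (occ_ax_sec Hi Hys) Hyocc => /size_ne; rewrite size_cat /=; lia'.
  rewrite -(occ_cat _ _ Hsub) in Hb0.
  have := occ_uniq Hb0 Hyocc => /(f_equal (drop (size ax))); rewrite !drop_size_cat // => -[E].
  by rewrite E eqxx in Hia.
have Hqout : forall i K0, i < size secs -> q \notin sec secs i -> K0 \in nth [::] ss i ->
    q \notin A :|: K0.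
  move=> i K0 Hi Hqi HK0; rewrite inE negb_or; apply/andP; split.
    apply/negP => H; apply: (NP_false Hqocc _ (HA q H)); exact: take_size.
  apply/negP => H; have [_ Hq'] := qblock q Hi (Hn i Hi) HK0.
  case: (Hq' H) => [Hqs|[b0 Hb0]]; first by rewrite Hqs in Hqi.
  rewrite -(occ_cat _ _ Hsub) in Hb0.
  by have := occ_uniq Hb0 Hqocc => /size_ne; rewrite size_cat /=; lia'.
have Hsecsub : forall i K0, i < size secs -> K0 \in nth [::] ss i ->
    sec secs i \subset A :|: K0.
  move=> i K0 Hi HK0; have [Hs0 _] := qblock x Hi (Hn i Hi) HK0.
  exact: (subset_trans Hs0 (subsetUr _ _)).
have Hlow : forall i K0, i < size secs -> i != a -> lx <= i <= rx -> q \notin sec secs i ->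
    K0 \in nth [::] ss i -> hi q < pt (A :|: K0).
  move=> i K0 Hi Hia Hir Hqi HK0.
  have HK : max_clique e (A :|: K0) := Hmc _ (Hins _ _ Hi HK0).
  have HKp : Kp (A :|: K0) = A :|: K0 by rewrite Kp_noy // (Hnoy _ _ Hi Hia HK0).
  have HxK : x \in Kp (A :|: K0).
    by rewrite HKp; apply: (subsetP (Hsecsub _ _ Hi HK0)); exact: x_in.
  have /andP [Lx _] := pt_in HK HxK.
  have [w [Hw Hwq Hqw]] := mc_out He HK (Hqout _ _ Hi Hqi HK0).
  have Hw' : w \in Kp (A :|: K0) by rewrite HKp.
  have /andP [Lw Uw] := pt_in HK Hw'.
  have [Q1 _] := qy_meet.
  case: (leqP (lo w) (hi q)) => Hc; last lia'.
  exfalso; move/negP: Hqw; apply; apply: meet_e; [by rewrite eq_sym | lia' | done].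
have Hhigh : forall i K0, i < size secs -> i != a -> q \in sec secs i ->
    K0 \in nth [::] ss i -> pt (A :|: K0) <= hi q.
  move=> i K0 Hi Hia Hqi HK0.
  have HK : max_clique e (A :|: K0) := Hmc _ (Hins _ _ Hi HK0).
  have HKp : Kp (A :|: K0) = A :|: K0 by rewrite Kp_noy // (Hnoy _ _ Hi Hia HK0).
  have HqK : q \in Kp (A :|: K0) by rewrite HKp; apply: (subsetP (Hsecsub _ _ Hi HK0)).
  by have /andP [_ U] := pt_in HK HqK.
have [l [r0 [Hlr [H1 H2 H3 H4 H5]]]] := q_range.
pose j := if l < a then l else a.+1.
have Hjv : (l < a /\ j = l) \/ (a <= l /\ j = a.+1).
  by rewrite /j; case: ifP => Hla; [left | right; move/negbT: Hla; rewrite -leqNgt].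
have Hj1 : lx < j by case: Hjv => -[? ->]; lia'.
have Hj2 : j < rx by case: Hjv => -[? ->]; lia'.
have Hja : j != a by apply/eqP; case: Hjv => -[? ->]; lia'.
have Hjs : j < size secs by lia'.
have Hqj : q \in sec secs j.
  by apply/(H5 j Hjs); case: Hjv => -[? ->]; apply/andP; split; lia'.
have Hlxs : lx < size secs by lia'.
have [K0j HK0j] := Hpick j Hjs.
have Pj := Hhigh j K0j Hjs Hja Hqj HK0j.
have Hpw : pairwise r s by rewrite -sorted_pairwise.
case: Hss => Es'.
  have [K0l HK0l] := Hpick lx Hlxs.
  have Hlxa : lx != a by apply/eqP; lia'.
  have Hlxr : lx <= lx <= rx by apply/andP; split; lia'.
  have Pl := Hlow lx K0l Hlxs Hlxa Hlxr Hqlx HK0l.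
  have Hsplit : s = pre ++ (map (setU A) (flatten (take j ss)) ++
                            map (setU A) (flatten (drop j ss))) ++ post.
    by rewrite Es Es' -map_cat -flatten_cat cat_take_drop.
  rewrite Hsplit in Hpw.
  have Hu : A :|: K0l \in map (setU A) (flatten (take j ss)).
    apply/mapP; exists K0l => //; apply/flattenP; exists (nth [::] ss lx) => //.
    rewrite -(nth_take [::] Hj1); apply: mem_nth; rewrite size_take_min Hsz leq_min Hj1; exact: Hlxs.
  have Hv : A :|: K0j \in map (setU A) (flatten (drop j ss)).
    apply/mapP; exists K0j => //; apply/flattenP; exists (nth [::] ss j) => //.
    by rewrite (drop_nth [::]) ?Hsz // mem_head.
  have := pw_mid Hpw Hu Hv => /= H; lia'.
have [K0r HK0r] := Hpick rx Hrx.
have Hrxa : rx != a by apply/eqP; lia'.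
have Hrxr : lx <= rx <= rx by apply/andP; split; lia'.
have Pr := Hlow rx K0r Hrx Hrxa Hrxr Hqrx HK0r.
have Hsplit : s = pre ++ (map (setU A) (flatten (rev (drop j.+1 ss))) ++
                          map (setU A) (flatten (rev (take j.+1 ss)))) ++ post.
  by rewrite Es Es' -map_cat -flatten_cat -rev_cat cat_take_drop.
rewrite Hsplit in Hpw.
have Hu : A :|: K0r \in map (setU A) (flatten (rev (drop j.+1 ss))).
  apply/mapP; exists K0r => //; rewrite mem_flatten_rev; apply/flattenP.
  exists (nth [::] ss rx) => //.
  have -> : nth [::] ss rx = nth [::] (drop j.+1 ss) (rx - j.+1) by rewrite nth_drop; congr nth; move: Hj2; clear; lia.
  apply: mem_nth; rewrite size_drop Hsz; move: Hj2 Hrx; clear; lia.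
have Hv : A :|: K0j \in map (setU A) (flatten (rev (take j.+1 ss))).
  apply/mapP; exists K0j => //; rewrite mem_flatten_rev; apply/flattenP.
  exists (nth [::] ss j) => //.
  rewrite -(nth_take [::] (ltnSn j)); apply: mem_nth; rewrite size_take_min Hsz leq_min ltnSn; exact: Hjs.
have := pw_mid Hpw Hu Hv => /= H; lia'.
Qed.

End Main.

Theorem mainTheorem14 (T : finType) (e : rel T) (t : mpq T) (x y q : T)
    (ax rest : seq nat) (secs : seq ({set T} * option (mpq T)))
    (a lx rx : nat) :
  interval_graph e ->
  is_MPQ_tree e t ->
  e x y ->
  (* node(x) is the Q-node at address ax, with sections secs *)
  subtree t ax = Some (QN secs) ->
  occ t ax x ->
  (* x lies exactly in sections lx..rx, i.e. lx = l(x), rx = r(x) *)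
  rx < size secs ->
  (forall i, i < size secs -> (x \in sec secs i <-> lx <= i <= rx)) ->
  (* node(y) lies strictly below node(x), in the subtree T_a *)
  occ t (ax ++ a :: rest) y ->
  (* central section *)
  lx < a < rx ->
  q \in sec secs a -> q \notin sec secs lx -> q \notin sec secs rx ->
  ~ interval_graph (remove_edge e x y).
Proof.
move=> He Ht Exy Hsub Hxocc Hrx Hx Hyocc Ha Hqa Hqlx Hqrx [lo [hi [Hlh Hm]]].
have Hm' : forall u v, remove_edge e x y u v <-> [/\ u != v, lo u <= hi v & lo v <= hi u].
  move=> u v; rewrite Hm; have := Hlh u; have := Hlh v.
  move: (lo u) (lo v) (hi u) (hi v) => a1 a2 b1 b2 A1 A2.
  split.
    by case=> H1 H2; split => //; move: H2; clear -A1 A2; lia.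
  by case=> H1 H2 H3; split => //; move: H2 H3; clear -A1 A2; lia.
clear Hm.
have Hxy : x != y by apply/eqP => E; move: Exy; rewrite E (eirr He).
have Hnm : ~ (lo x <= hi y /\ lo y <= hi x).
  case=> H1 H2; have := (Hm' x y).2 (And3 Hxy H1 H2).
  by rewrite /remove_edge !eqxx /= andbF.
case: (leqP (lo x) (hi y)) => Hc; last first.
  by apply: (final He Ht Exy Hsub Hrx Hx Hyocc Ha Hqa Hqlx Hqrx Hlh Hm' Hc).
have Hc2 : hi x < lo y by rewrite ltnNge; apply/negP => H; apply: Hnm.
pose N := \max_v hi v.
have HN : forall v, hi v <= N by move=> v; exact: leq_bigmax.
clearbody N.
have Hlh2 : forall v, N - hi v <= N - lo v.
  by move=> v; move: (Hlh v) (HN v); clear; lia.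
have Hm2 : forall u v, remove_edge e x y u v <->
    [/\ u != v, N - hi u <= N - lo v & N - hi v <= N - lo u].
  move=> u v; rewrite Hm'; move: (Hlh u) (Hlh v) (HN u) (HN v).
  move: (lo u) (lo v) (hi u) (hi v) => a1 a2 b1 b2 A1 A2 A3 A4.
  split => -[H1 H2 H3]; split => //; move: H2 H3; clear -A1 A2 A3 A4; lia.
have Hyx2 : N - lo y < N - hi x.
  move: (Hlh y) (HN y) Hc2; clear; lia.
exact: (final He Ht Exy Hsub Hrx Hx Hyocc Ha Hqa Hqlx Hqrx Hlh2 Hm2 Hyx2).
Qed.
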